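(* In the dynamic oligopoly model of the context with $\delta>1/2$ and $M(s)=\sum_{x\ge0}k(x)s(x)$, where $k\ge0$ is increasing and $k(x)\le C_kx^{p_k}$ for constants $C_k>0$, $p_k\ge0$: for every $m$ and every policy $g(\cdot,m):X\to A$, the Markov chain with kernel $W(x,g(x,m),\cdot)$ is irreducible, aperiodic and positive recurrent, hence has a unique invariant distribution $s^{m,g}$, and all moments of $s^{m,g}$ are bounded uniformly over $m$ and $g$. Consequently, with $a=0$, $d(x,y)=|x-y|$, $x_0=0$ and $p=2$, there exists $b>0$ such that for every $m\in[0,b]$ and policy $g$: $s^{m,g}$ is unique, $M(s^{0,g})\ge0$, $M(s^{b,g})\le b$, and $\sum_x x^2 s^{m,g}(x)\le C$ for a constant $C<\infty$ independent of $m$ and $g$.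
   Context: Dynamic oligopoly model. States $X=\{0,1,2,\dots\}$; actions $A=[\underline a,1]$ with $0<\underline a<1$. For $x\ge1$: $W(x,a,x+1)=\frac{(1-\delta)a}{1+a}$, $W(x,a,x)=\frac{1-\delta+\delta a}{1+a}$, $W(x,a,x-1)=\frac{\delta}{1+a}$, $W(x,a,y)=0$ otherwise; $W(0,a,1)=\frac{(1-\delta)a}{1+a}$, $W(0,a,0)=1-W(0,a,1)$; $\delta\in(0,1)$. A policy is any map $x\mapsto g(x,m)\in A$. *)

(* Defs.v *)
From HB Require Import structures.
From mathcomp Require Import all_boot all_order all_algebra.
From mathcomp Require Import all_classical all_reals all_analysis.
Set Implicit Arguments. Unset Strict Implicit. Unset Printing Implicit Defensive.
Import Order.TTheory GRing.Theory Num.Theory.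
Local Open Scope ring_scope.

Section Model.
Variable R : realType.

Definition W (delta : R) (x : nat) (a : R) (y : nat) : R :=
  if x == 0%N then
    (if y == 1%N then (1 - delta) * a / (1 + a)
     else if y == 0%N then 1 - (1 - delta) * a / (1 + a) else 0)
  else if y == x.+1 then (1 - delta) * a / (1 + a)
  else if y == x then (1 - delta + delta * a) / (1 + a)
  else if y == x.-1 then delta / (1 + a)
  else 0.

Local Open Scope ereal_scope.

Fixpoint nstep (P : nat -> nat -> R) (n : nat) (x y : nat) : \bar R :=
  match n with
  | 0%N => (if x == y then 1 else 0)%:E
  | n'.+1 => \sum_(z <oo) ((P x z)%:E * nstep P n' z y)
  end.

(* first-passage probabilities f^n(x,y) = P_x(tau_y = n), tau_y = inf{n >= 1 : X_n = y} *)
Fixpoint fpass (P : nat -> nat -> R) (n : nat) (x y : nat) : \bar R :=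
  match n with
  | 0%N => 0
  | n'.+1 =>
    match n' with
    | 0%N => (P x y)%:E
    | _ => \sum_(z <oo | z != y) ((P x z)%:E * fpass P n' z y)
    end
  end.

Definition irreducible (P : nat -> nat -> R) : Prop :=
  forall x y, exists n, 0 < nstep P n x y.

Definition aperiodic (P : nat -> nat -> R) : Prop :=
  forall x (d : nat),
    (forall n, (0 < n)%N -> 0 < nstep P n x x -> (d %| n)%N) -> d = 1%N.

Definition positive_recurrent (P : nat -> nat -> R) : Prop :=
  forall x,
    \sum_(1 <= n <oo) fpass P n x x = 1 /\
    \sum_(1 <= n <oo) ((n%:R)%:E * fpass P n x x) < +oo.

Definition invariant_distribution (P : nat -> nat -> R) (s : nat -> R) : Prop :=
  (forall x, (0 <= s x)%R) /\
  \sum_(x <oo) (s x)%:E = 1 /\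
  forall y, \sum_(x <oo) (s x * P x y)%:E = (s y)%:E.

Definition unique_invariant_distribution (P : nat -> nat -> R) : Prop :=
  exists s, invariant_distribution P s /\
    forall s', invariant_distribution P s' -> s' = s.

Definition Mfun (k : nat -> R) (s : nat -> R) : \bar R :=
  \sum_(x <oo) (k x * s x)%:E.

Definition Pol (delta : R) (g : nat -> R -> R) (m : R) : nat -> nat -> R :=
  fun x y => W delta x (g x m) y.

End Model.

(* Main.v *)
Require Import Defs.
From HB Require Import structures.
From mathcomp Require Import all_boot all_order all_algebra.
From mathcomp Require Import all_classical all_reals all_analysis.
From mathcomp Require Import ring lra zify.
Import Order.TTheory GRing.Theory Num.Theory.
Set Implicit Arguments. Unset Strict Implicit.
Local Open Scope ring_scope.

Section Ser.
Variable R : realType.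
Local Open Scope ereal_scope.

Lemma series_trunc (f : nat -> \bar R) (P : pred nat) m N :
  (m <= N)%N -> (forall i, (N <= i)%N -> P i -> f i = 0) ->
  \sum_(m <= i <oo | P i) f i = \sum_(m <= i < N | P i) f i.
Proof.
move=> mN f0; apply: lim_near_cst => //. near=> n.
have Nn : (N <= n)%N by near: n; exists N.
rewrite (@big_cat_nat _ _ _ N) // /= [X in _ + X](_ : _ = 0) ?adde0 //.
rewrite big_nat_cond big1 // => i /andP[/andP[+ _] Pi].
by move=> /f0; apply.
Unshelve. all: by end_near. Qed.

Lemma series_le (f : nat -> \bar R) (P : pred nat) m C :
  (forall i, (m <= i)%N -> P i -> 0 <= f i) ->
  (forall N, \sum_(m <= i < N | P i) f i <= C) ->
  \sum_(m <= i <oo | P i) f i <= C.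
Proof.
move=> f0 hC; apply: lime_le; first exact: is_cvg_nneseries.
by apply: nearW.
Qed.
End Ser.


Section Mom.
Variable R : realType.

Lemma geo_sum (t : R) N : 0 <= t -> t < 1 -> \sum_(0 <= x < N) t ^+ x <= (1 - t)^-1.
Proof.
move=> t0 t1.
have e : \sum_(0 <= x < N) t ^+ x * (1 - t) = 1 - t ^+ N.
  elim: N => [|N IH]; first by rewrite big_geq // expr0 subrr.
  by rewrite big_nat_recr //= IH exprSr; ring.
rewrite -div1r ler_pdivlMr ?subr_gt0 // mulr_suml e.
by rewrite lerBlDr lerDl exprn_ge0.
Qed.

Lemma lin_bnd (r : R) x : 0 <= r -> r < 1 -> x%:R * r ^+ x <= (1 - r)^-1.
Proof.
move=> r0 r1.
have key : forall x, r ^+ x * (1 + x%:R * (1 - r)) <= 1.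
  elim=> [|y IH]; first by rewrite expr0 mul0r addr0 mul1r.
  have h1 : r ^+ y.+1 <= 1 by apply: exprn_ile1 => //; apply: ltW.
  have h0 : 0 <= r ^+ y by apply: exprn_ge0.
  have ey : y.+1%:R = y%:R + 1 :> R by rewrite -addn1 natrD.
  have -> : r ^+ y.+1 * (1 + y.+1%:R * (1 - r)) =
            r * (r ^+ y * (1 + y%:R * (1 - r))) + r ^+ y.+1 * (1 - r).
    by rewrite ey exprS; ring.
  have : r * (r ^+ y * (1 + y%:R * (1 - r))) <= r by rewrite ler_piMr.
  have : r ^+ y.+1 * (1 - r) <= 1 - r by rewrite ler_piMl // subr_ge0 ltW.
  lra.
rewrite -div1r ler_pdivlMr ?subr_gt0 //.
have := key x; have := exprn_ge0 x r0; nra.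
Qed.

Lemma sqrt_facts (r : R) : 0 <= r -> r < 1 ->
  0 <= Num.sqrt r /\ Num.sqrt r < 1 /\ forall x, r ^+ x = Num.sqrt r ^+ x * Num.sqrt r ^+ x.
Proof.
move=> r0 r1; split; first exact: sqrtr_ge0.
split; first by rewrite -sqrtr1 ltr_sqrt.
by move=> x; rewrite -exprMn -expr2 sqr_sqrtr.
Qed.

Lemma pol_bnd q : forall r : R, 0 <= r -> r < 1 ->
  exists K, 0 <= K /\ forall x, x%:R ^+ q * r ^+ x <= K.
Proof.
elim: q => [|q IH] r r0 r1.
  by exists 1; split => // x; rewrite expr0 mul1r exprn_ile1 // ltW.
have [s0 [s1 se]] := sqrt_facts r0 r1.
have [K [K0 hK]] := IH _ s0 s1.
exists (K * (1 - Num.sqrt r)^-1); split.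
  by rewrite mulr_ge0 // invr_ge0 subr_ge0 ltW.
move=> x; rewrite se.
have -> : x%:R ^+ q.+1 * (Num.sqrt r ^+ x * Num.sqrt r ^+ x) =
  (x%:R ^+ q * Num.sqrt r ^+ x) * (x%:R * Num.sqrt r ^+ x) by rewrite exprS; ring.
apply: ler_pM; [by rewrite mulr_ge0 ?exprn_ge0 | by rewrite mulr_ge0 ?exprn_ge0 | |].
  exact: hK.
exact: lin_bnd.
Qed.

Lemma mom_bnd q (r : R) : 0 <= r -> r < 1 ->
  exists C, forall N, \sum_(0 <= x < N) x%:R ^+ q * r ^+ x <= C.
Proof.
move=> r0 r1.
have [s0 [s1 se]] := sqrt_facts r0 r1.
have [K [K0 hK]] := pol_bnd q s0 s1.
exists (K * (1 - Num.sqrt r)^-1) => N.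
apply: le_trans (_ : \sum_(0 <= x < N) K * Num.sqrt r ^+ x <= _).
  apply: ler_sum_nat => i _; rewrite se mulrA.
  by apply: ler_wpM2r; [rewrite exprn_ge0 | apply: hK].
by rewrite -mulr_sumr ler_wpM2l // geo_sum.
Qed.

End Mom.

Section Model.
Variables (R : realType) (delta abar : R).
Hypothesis hd : 1 / 2 < delta < 1.
Hypothesis ha : 0 < abar < 1.
Let hd1 : 1/2 < delta. Proof. by case/andP: hd. Qed.
Let hd2 : delta < 1. Proof. by case/andP: hd. Qed.
Let ha1 : 0 < abar. Proof. by case/andP: ha. Qed.
Let ha2 : abar < 1. Proof. by case/andP: ha. Qed.
Ltac gh := pose proof hd1; pose proof hd2; pose proof ha1; pose proof ha2.

Definition pp (b : R) := (1 - delta) * b / (1 + b).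
Definition qq (b : R) := delta / (1 + b).
Definition rr (b : R) := (1 - delta + delta * b) / (1 + b).

Lemma W_row x b z : W delta x.+1 b z =
  if z == x.+2 then pp b else if z == x.+1 then rr b else if z == x then qq b else 0.
Proof. by []. Qed.

Lemma W_row0 b z : W delta 0 b z =
  if z == 1%N then pp b else if z == 0%N then 1 - pp b else 0.
Proof. by []. Qed.

Lemma W_far x b z : (x.+2 <= z)%N -> W delta x b z = 0.
Proof.
case: x => [|x] h; rewrite ?W_row ?W_row0.
  by rewrite !ifN_eq //; apply/eqP => E; subst z.
by rewrite !ifN_eq //; apply/eqP => E; subst z; rewrite ?ltnn in h; lia.
Qed.

Lemma W_far2 x b z : (z.+2 <= x)%N -> W delta x b z = 0.
Proof.
case: x => [|x] h //; rewrite W_row.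
by rewrite !ifN_eq //; apply/eqP => E; subst z; lia.
Qed.

Lemma W_up x b : W delta x b x.+1 = pp b.
Proof. by case: x => [|x]; rewrite ?W_row ?W_row0 ?eqxx. Qed.

Lemma W_down x b : W delta x.+1 b x = qq b.
Proof.
rewrite W_row; have -> : (x == x.+2) = false by lia.
have -> : (x == x.+1) = false by lia. by rewrite eqxx.
Qed.

Lemma W_diag x b : W delta x.+1 b x.+1 = rr b.
Proof. rewrite W_row; have -> : (x.+1 == x.+2) = false by lia. by rewrite eqxx. Qed.

Lemma W_diag0 b : W delta 0 b 0 = 1 - pp b.
Proof. by []. Qed.

Section Bnd.
Variable b : R.
Hypothesis hb : abar <= b <= 1.
Let hb1 : abar <= b. Proof. by case/andP: hb. Qed.
Let hb2 : b <= 1. Proof. by case/andP: hb. Qed.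
Ltac gb := gh; pose proof hb1; pose proof hb2.

Lemma b_gt0 : 0 < b. Proof. gb; lra. Qed.
Lemma opb_gt0 : 0 < 1 + b. Proof. gb; lra. Qed.

Lemma sum_pqr : pp b + qq b + rr b = 1.
Proof. rewrite /pp /qq /rr; field; apply/lt0r_neq0/opb_gt0. Qed.

Lemma pp_gt0 : 0 < pp b.
Proof. rewrite /pp divr_gt0 ?mulr_gt0 ?opb_gt0 ?b_gt0 //; gb; lra. Qed.
Lemma qq_gt0 : 0 < qq b.
Proof. rewrite /qq divr_gt0 ?opb_gt0 //; gb; lra. Qed.
Lemma rr_gt0 : 0 < rr b.
Proof. rewrite /rr divr_gt0 ?opb_gt0 //; have := b_gt0; gb; nra. Qed.

Lemma pp_le : pp b <= (1 - delta) / 2.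
Proof.
rewrite /pp ler_pdivrMr ?opb_gt0 //.
rewrite mulrAC ler_pdivlMr //; have := b_gt0; gb; nra.
Qed.

Lemma pp_ge : (1 - delta) * abar / 2 <= pp b.
Proof.
rewrite /pp ler_pdivlMr ?opb_gt0 // mulrAC ler_pdivrMr //; rewrite -!mulrA ler_wpM2l //; gb; nra.
Qed.

Lemma qq_ge : delta / 2 <= qq b.
Proof. rewrite /qq ler_pdivlMr ?opb_gt0 // mulrAC ler_pdivrMr //; gb; nra. Qed.

Lemma qq_le1 : qq b <= 1.
Proof. rewrite /qq ler_pdivrMr ?opb_gt0 //; gb; lra. Qed.

Lemma qmp : (2 * delta - 1) / 2 <= qq b - pp b.
Proof.
have -> : qq b - pp b = (delta - (1 - delta) * b) / (1 + b).
  by rewrite /pp /qq; field; apply/lt0r_neq0/opb_gt0.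
rewrite ler_pdivlMr ?opb_gt0 // mulrAC ler_pdivrMr //; gb; nra.
Qed.

Lemma pp_lt1 : pp b < 1.
Proof. have := pp_le; gb; lra. Qed.
End Bnd.

Lemma W_ge0 x b z : abar <= b <= 1 -> 0 <= W delta x b z.
Proof.
move=> hb; have := pp_gt0 hb; have := qq_gt0 hb; have := rr_gt0 hb;
  have := pp_lt1 hb => *.
case: x => [|x]; rewrite ?W_row ?W_row0; repeat case: ifP => _; gh; lra.
Qed.

Lemma rowS (F : nat -> R) x b :
  \sum_(z < x.+3) W delta x.+1 b z * F z = qq b * F x + rr b * F x.+1 + pp b * F x.+2.
Proof.
rewrite -(big_mkord xpredT (fun z => W delta x.+1 b z * F z)).
rewrite !big_nat_recr //= big_nat_cond big1 ?add0r; last first.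
  by move=> i /andP[/andP[_ hi] _]; rewrite W_far2 ?mul0r //; lia.
by rewrite W_down W_diag W_row eqxx.
Qed.

Lemma row0 (F : nat -> R) b :
  \sum_(z < 2) W delta 0 b z * F z = (1 - pp b) * F 0%N + pp b * F 1%N.
Proof. by rewrite -(big_mkord xpredT (fun z => W delta 0 b z * F z)) !big_nat_recr //= big_geq // add0r W_diag0 W_up. Qed.

Lemma colS (s a : nat -> R) y :
  \sum_(x < y.+3) s x * W delta x (a x) y.+1 =
    s y * pp (a y) + s y.+1 * rr (a y.+1) + s y.+2 * qq (a y.+2).
Proof.
rewrite -(big_mkord xpredT (fun z => s z * W delta z (a z) y.+1)).
rewrite !big_nat_recr //= big_nat_cond big1 ?add0r; last first.
  by move=> i /andP[/andP[_ hi] _]; rewrite W_far ?mulr0 //; lia.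
by rewrite W_up W_diag W_down.
Qed.

Lemma col0 (s a : nat -> R) :
  \sum_(x < 2) s x * W delta x (a x) 0 = s 0%N * (1 - pp (a 0%N)) + s 1%N * qq (a 1%N).
Proof. by rewrite -(big_mkord xpredT (fun z => s z * W delta z (a z) 0)) !big_nat_recr //= big_geq // add0r W_diag0 W_down. Qed.


Section Chain.
Variable a : nat -> R.
Hypothesis haa : forall x, abar <= a x <= 1.
Let P : nat -> nat -> R := fun x y => W delta x (a x) y.

Lemma P_ge0 x y : 0 <= P x y. Proof. exact: W_ge0. Qed.
Lemma P_far x y : (x.+2 <= y)%N -> P x y = 0. Proof. exact: W_far. Qed.
Lemma P_up x : 0 < P x x.+1. Proof. by rewrite /P W_up; apply: pp_gt0. Qed.
Lemma P_down x : 0 < P x.+1 x. Proof. by rewrite /P W_down; apply: qq_gt0. Qed.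
Lemma P_diag x : 0 < P x x.
Proof.
case: x => [|x]; rewrite /P ?W_diag0 ?W_diag; last exact: rr_gt0.
by have := pp_lt1 (haa 0); rewrite subr_gt0.
Qed.

Section Irr.
Local Open Scope ereal_scope.

Lemma nstep_ge0 n x y : 0 <= nstep P n x y.
Proof.
elim: n x y => [|n IH] x y /=; first by case: eqP.
apply: nneseries_ge0 => i _ _; apply: mule_ge0 => //; rewrite lee_fin; exact: P_ge0.
Qed.

Lemma nstep_S_ge n x y z : (P x z)%:E * nstep P n z y <= nstep P n.+1 x y.
Proof.
rewrite /=; apply: le_trans (nneseries_lim_ge z.+1 _); last first.
  by move=> i _ _; apply: mule_ge0; rewrite ?lee_fin ?P_ge0 ?nstep_ge0.
rewrite big_nat_recr //= leeDr //; apply: sume_ge0 => i _.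
by apply: mule_ge0; rewrite ?lee_fin ?P_ge0 ?nstep_ge0.
Qed.

Lemma nstep_mono n x y z : 0 < nstep P n z y -> (0 < P x z)%R -> 0 < nstep P n.+1 x y.
Proof.
move=> h1 h2; apply: lt_le_trans (nstep_S_ge n x y z).
by apply: mule_gt0 => //; rewrite lte_fin.
Qed.

Lemma irr : irreducible P.
Proof.
have down : forall d x, 0 < nstep P d (x + d) x.
  elim=> [|d IH] x; first by rewrite addn0 /= eqxx lte_fin.
  apply: (nstep_mono (z := (x + d)%N)) => //.
  by rewrite addnS; apply: P_down.
have up : forall d x, 0 < nstep P d x (x + d).
  elim=> [|d IH] x; first by rewrite addn0 /= eqxx lte_fin.
  apply: (nstep_mono (z := x.+1)); last exact: P_up.
  by rewrite addnS -addSn; apply: IH.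
move=> x y; case: (leqP x y) => h.
  by exists (y - x)%N; rewrite -{2}(subnKC h); apply: up.
by exists (x - y)%N; rewrite -{2}(subnKC (ltnW h)); apply: down.
Qed.

Lemma aper : aperiodic P.
Proof.
move=> x d hdv; apply/eqP; rewrite -dvdn1; apply: hdv => //.
apply: (nstep_mono (z := x)); last exact: P_diag.
by rewrite /= eqxx lte_fin.
Qed.

End Irr.

Fixpoint TR (y n x : nat) {struct n} : R :=
  if n is n'.+1 then \sum_(z < x.+2 | (z : nat) != y) P x z * TR y n' z else 1.

Fixpoint FR (y n x : nat) {struct n} : R :=
  match n with
  | 0 => 0
  | n'.+1 => if n' is 0 then P x y else \sum_(z < x.+2 | (z : nat) != y) P x z * FR y n' z
  end.

Lemma split_y (F : nat -> R) N y : ((N <= y)%N -> F y = 0) ->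
  \sum_(z < N) F z = F y + \sum_(z < N | (z : nat) != y) F z.
Proof.
case: (ltnP y N) => h F0.
  by rewrite (bigD1 (Ordinal h)) //=.
rewrite F0 // add0r; apply: eq_bigl => i; symmetry; apply/eqP => E.
by have := ltn_ord i; rewrite E; lia.
Qed.

Lemma rowP0 (F : nat -> R) :
  \sum_(z < 2) P 0 z * F z = (1 - pp (a 0%N)) * F 0%N + pp (a 0%N) * F 1%N.
Proof. exact: row0. Qed.

Lemma rowPS (F : nat -> R) x :
  \sum_(z < x.+3) P x.+1 z * F z =
    qq (a x.+1) * F x + rr (a x.+1) * F x.+1 + pp (a x.+1) * F x.+2.
Proof. exact: rowS. Qed.

Lemma rowsum1 x : \sum_(z < x.+2) P x z = 1.
Proof.
transitivity (\sum_(z < x.+2) P x z * (fun _ => 1) z).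
  by apply: eq_bigr => i _; rewrite mulr1.
case: x => [|x]; first by rewrite (rowP0 (fun _ => 1)) !mulr1 subrK.
by rewrite (rowPS (fun _ => 1)) !mulr1 -(sum_pqr (haa x.+1)); lra.
Qed.

Lemma TR_ge0 y n x : 0 <= TR y n x.
Proof.
elim: n x => [|n IH] x /=; first by [].
by apply: sumr_ge0 => i _; rewrite mulr_ge0 ?P_ge0.
Qed.

Lemma FR_ge0 y n x : 0 <= FR y n x.
Proof.
elim: n x => [|n IH] x //=; case: n IH => [|n] IH; first exact: P_ge0.
by apply: sumr_ge0 => i _; rewrite mulr_ge0 ?P_ge0.
Qed.

Lemma FR_TR y n x : FR y n.+1 x + TR y n.+1 x = TR y n x.
Proof.
elim: n x => [|n IH] x.
  rewrite /=; under eq_bigr do rewrite mulr1.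
  by rewrite -[RHS](rowsum1 x) (@split_y (P x) _ y) // => h; apply: P_far.
rewrite [FR _ _ _]/= [TR y n.+2 x]/= -big_split /=.
by apply: eq_bigr => z _; rewrite -mulrDr IH.
Qed.

Section Lyap.
Variable y : nat.
Definition pmin := (1 - delta) * abar / 2.
Definition gam := 2 / pmin.
Definition cc := 2 / (2 * delta - 1).
Definition V x := if (x <= y)%N then \sum_(x <= j < y) gam ^+ j.+1
                  else cc * (x%:R - y%:R).

Lemma pmin_gt0 : 0 < pmin.
Proof. rewrite /pmin divr_gt0 ?mulr_gt0 //; gh; lra. Qed.

Lemma gam_ge1 : 1 <= gam.
Proof.
have := pmin_gt0 => hp.
rewrite /gam ler_pdivlMr // mul1r /pmin ler_pdivrMr //.
by gh; nra.
Qed.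

Lemma ppgam x : 2 <= pp (a x) * gam.
Proof.
have := pmin_gt0 => hp; have := pp_ge (haa x) => h.
rewrite /gam mulrA ler_pdivlMr //; rewrite -/pmin in h; nra.
Qed.

Lemma cc_gt0 : 0 < cc. Proof. rewrite /cc divr_gt0 //; gh; lra. Qed.

Lemma ccqp x : 1 <= cc * (qq (a x) - pp (a x)).
Proof.
have := qmp (haa x) => h; have h0 : 0 < 2 * delta - 1 by gh; lra.
have -> : 1 = cc * ((2 * delta - 1) / 2).
  by rewrite /cc; field; apply/lt0r_neq0.
by rewrite ler_wpM2l // ltW // cc_gt0.
Qed.

Lemma V_ge0 x : 0 <= V x.
Proof.
rewrite /V; case: ifP => h.
  by apply: sumr_ge0 => i _; apply: exprn_ge0; have := gam_ge1; lra.
apply: mulr_ge0; [exact: ltW cc_gt0 | rewrite subr_ge0 ler_nat; move/negbT: h; lia].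
Qed.

Lemma V_y : V y = 0.
Proof. by rewrite /V leqnn big_geq. Qed.

Lemma V_lt x : (x < y)%N -> V x = gam ^+ x.+1 + V x.+1.
Proof. by move=> h; rewrite /V h (ltnW h) big_ltn. Qed.

Lemma V_ge x : (y <= x)%N -> V x = cc * (x%:R - y%:R).
Proof.
move=> h; case: (eqVneq x y) => [->|ne]; first by rewrite V_y subrr mulr0.
by rewrite /V ifF //; apply/negbTE; lia.
Qed.

Lemma drift x : x != y -> \sum_(z < x.+2) P x z * V z <= V x - 1.
Proof.
move=> ne; case: (ltnP x y) => h.
  case: x ne h => [|x] ne h.
    rewrite rowP0 (V_lt h) expr1.
    have := ppgam 0; have := V_ge0 1; have := pp_lt1 (haa 0); nra.
  rewrite rowPS (V_lt (ltnW h)) (V_lt h) (exprSr gam x.+1).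
  set G := gam ^+ x.+1.
  have hG : 1 <= G by apply: exprn_ege1; apply: gam_ge1.
  have er : rr (a x.+1) = 1 - pp (a x.+1) - qq (a x.+1).
    by rewrite -(sum_pqr (haa x.+1)); ring.
  rewrite er.
  have hA : 2 * G <= pp (a x.+1) * gam * G.
    by apply: ler_wpM2r; [lra | apply: ppgam].
  have hB : qq (a x.+1) * G <= G.
    by rewrite ler_piMl //; [lra | apply: qq_le1].
  nra.
case: x ne h => [|x] ne h; first by lia.
have hy : (y <= x)%N by lia.
rewrite rowPS !V_ge; try lia.
have := ccqp x.+1.
have e1 : x.+1%:R = x%:R + 1 :> R by rewrite -addn1 natrD.
have e2 : x.+2%:R = x%:R + 2 :> R by rewrite -addn2 natrD.
have er : rr (a x.+1) = 1 - pp (a x.+1) - qq (a x.+1).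
  by rewrite -(sum_pqr (haa x.+1)); ring.
rewrite e1 e2 er; nra.
Qed.

Definition S N x := \sum_(0 <= n < N) TR y n x.

Lemma S_step N x : S N.+1 x = 1 + \sum_(z < x.+2 | (z : nat) != y) P x z * S N z.
Proof.
rewrite /S big_nat_recl //=; congr (_ + _).
rewrite exchange_big /=; apply: eq_bigr => z _; rewrite mulr_sumr //.
Qed.

Lemma S_le N x : x != y -> S N x <= V x.
Proof.
elim: N x => [|N IH] x ne; first by rewrite /S big_geq // V_ge0.
rewrite S_step.
have h1 : \sum_(z < x.+2 | (z : nat) != y) P x z * S N z <= \sum_(z < x.+2 | (z : nat) != y) P x z * V z.
  by apply: ler_sum => i hi; apply: ler_wpM2l; [apply: P_ge0 | apply: IH].
have h2 := drift ne.
rewrite (@split_y (fun z => P x z * V z) _ y) /= in h2; last by rewrite V_y mulr0.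
rewrite V_y mulr0 add0r in h2; lra.
Qed.

Definition Bd := 1 + \sum_(z < y.+2) P y z * V z.

Lemma Bd_ge1 : 1 <= Bd.
Proof.
rewrite /Bd lerDl; apply: sumr_ge0 => i _; apply: mulr_ge0; [apply: P_ge0|apply: V_ge0].
Qed.

Lemma S_le_y N : S N y <= Bd.
Proof.
case: N => [|N]; first by rewrite /S big_geq //; have := Bd_ge1; lra.
rewrite S_step /Bd lerD2l (@split_y (fun z => P y z * V z) _ y) /=;
  last by rewrite V_y mulr0.
rewrite V_y mulr0 add0r.
by apply: ler_sum => i hi; apply: ler_wpM2l; [apply: P_ge0 | apply: S_le].
Qed.

Lemma TR_mono m n x : (m <= n)%N -> TR y n x <= TR y m x.
Proof.
elim: n => [|n IH] h; first by have -> : m = 0%N by lia.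
case: (eqVneq m n.+1) => [->//|ne].
apply: le_trans (IH _); last by lia.
have := FR_TR y n x; have := FR_ge0 y n.+1 x; lra.
Qed.

Lemma TR_small N : N.+1%:R * TR y N y <= Bd.
Proof.
apply: le_trans (S_le_y N.+1).
have -> : N.+1%:R * TR y N y = \sum_(0 <= i < N.+1) TR y N y.
  by rewrite sumr_const_nat subn0 mulr_natl.
by apply: ler_sum_nat => i hi; apply: TR_mono; lia.
Qed.

Lemma sumF N : \sum_(1 <= n < N.+1) FR y n y = 1 - TR y N y.
Proof.
elim: N => [|N IH]; first by rewrite big_geq // subrr.
have := FR_TR y N y; rewrite big_nat_recr //= IH; lra.
Qed.

Lemma sumNF N : \sum_(1 <= n < N.+1) n%:R * FR y n y + N%:R * TR y N y = S N y.
Proof.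
elim: N => [|N IH]; first by rewrite big_geq // /S big_geq // mul0r addr0.
have h := FR_TR y N y; rewrite /S in IH *.
rewrite big_nat_recr //= [in RHS]big_nat_recr //=.
rewrite -addrA -mulrDr h -IH -[N.+1]addn1 natrD mulrDl mul1r; lra.
Qed.

End Lyap.

Lemma real_lim (r B : R) : (forall N : nat, 1 - B / N.+1%:R <= r) -> 1 <= r.
Proof.
move=> h; rewrite leNgt; apply/negP => hr.
have hr' : 0 < 1 - r by lra.
have hN := truncnS_gt (B / (1 - r)).
set N := Num.Def.trunc _ in hN.
have := h N; rewrite ltr_pdivrMr // in hN.
have hN0 : (0 < N.+1%:R :> R)%R by rewrite ltr0n.
have : B / N.+1%:R < 1 - r by rewrite ltr_pdivrMr // mulrC.
clearbody N; move: (B / N.+1%:R) => t; lra.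
Qed.

Section PR.
Local Open Scope ereal_scope.

Lemma fpassE n x y : fpass P n x y = (FR y n x)%:E.
Proof.
elim: n x => [|n IH] x //; case: n IH => [|n] IH //.
transitivity (\sum_(z <oo | z != y) ((P x z)%:E * fpass P n.+1 z y)); first by [].
under eq_eseriesr do rewrite IH -EFinM.
rewrite (@series_trunc _ _ _ _ x.+2) //; last first.
  by move=> i hi _; rewrite P_far // mul0r.
by rewrite sumEFin big_mkord.
Qed.

Lemma posrec : positive_recurrent P.
Proof.
move=> y.
have E1 : \sum_(1 <= n <oo) fpass P n y y = \sum_(1 <= n <oo) (FR y n y)%:E.
  by apply: eq_eseriesr => n _; exact: fpassE.
have E2 : \sum_(1 <= n <oo) ((n%:R)%:E * fpass P n y y) =
          \sum_(1 <= n <oo) ((n%:R * FR y n y)%:E).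
  by apply: eq_eseriesr => n _; rewrite fpassE EFinM.
rewrite E1 E2.
have hle : \sum_(1 <= n <oo) (FR y n y)%:E <= 1.
  apply: series_le => [n _ _|N]; first by rewrite lee_fin FR_ge0.
  rewrite sumEFin lee_fin; case: N => [|N]; first by rewrite big_geq.
  by rewrite sumF; have := TR_ge0 y N y; lra.
split.
  apply/eqP; rewrite eq_le hle /=.
  have h0 : 0 <= \sum_(1 <= n <oo) (FR y n y)%:E.
    by apply: nneseries_ge0 => n _ _; rewrite lee_fin FR_ge0.
  have hfin : \sum_(1 <= n <oo) (FR y n y)%:E \is a fin_num.
    by rewrite ge0_fin_numE // (le_lt_trans hle) // ltey.
  rewrite -(fineK hfin) lee_fin; apply: (@real_lim _ (Bd y)) => N.
  rewrite -lee_fin fineK //; apply: le_trans (nneseries_lim_ge N.+1 _); last first.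
    by move=> n _ _; rewrite lee_fin FR_ge0.
  rewrite sumEFin sumF lee_fin lerD2l lerN2.
  have := TR_small y N; have hN0 : (0 < N.+1%:R :> R)%R by rewrite ltr0n.
  by rewrite ler_pdivlMr // mulrC.
apply: (@le_lt_trans _ _ (Bd y)%:E); last by rewrite ltey.
apply: series_le => [n _ _|N]; first by rewrite lee_fin mulr_ge0 ?FR_ge0.
rewrite sumEFin lee_fin; case: N => [|N]; first by rewrite big_geq //; have := Bd_ge1 y; lra.
apply: le_trans (S_le_y y N).
rewrite -(sumNF y N) lerDl mulr_ge0 ?TR_ge0 //.
Qed.

End PR.


Definition rho0 := (1 - delta) / delta.

Lemma rho0_ge0 : 0 <= rho0. Proof. rewrite /rho0 divr_ge0 //; gh; lra. Qed.
Lemma rho0_lt1 : rho0 < 1.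
Proof. rewrite /rho0 ltr_pdivrMr; gh; lra. Qed.

Fixpoint pi x := if x is x'.+1 then pi x' * pp (a x') / qq (a x) else 1.

Lemma qq_neq0 x : qq (a x) != 0. Proof. exact/lt0r_neq0/(qq_gt0 (haa x)). Qed.

Lemma pi_gt0 x : 0 < pi x.
Proof.
elim: x => [|x IH] /=; first by [].
apply: divr_gt0; first apply: mulr_gt0 => //.
  exact: pp_gt0 (haa x).
exact: qq_gt0 (haa x.+1).
Qed.

Lemma pi_bal x : pi x.+1 * qq (a x.+1) = pi x * pp (a x).
Proof. by rewrite /= divfK // qq_neq0. Qed.

Lemma ratio_le x : pp (a x) / qq (a x.+1) <= rho0.
Proof.
rewrite ler_pdivrMr; last exact: qq_gt0 (haa x.+1).
have h1 := pp_le (haa x); have h2 := qq_ge (haa x.+1).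
apply: (le_trans h1); rewrite /rho0.
have -> : (1 - delta) / 2 = (1 - delta) / delta * (delta / 2).
  by field; apply/lt0r_neq0; gh; lra.
by rewrite ler_wpM2l // rho0_ge0.
Qed.

Lemma pi_le x : pi x <= rho0 ^+ x.
Proof.
elim: x => [|x IH]; first by rewrite expr0.
rewrite [pi _]/= -mulrA exprSr ler_pM //; first exact: ltW (pi_gt0 x).
  by apply: divr_ge0; apply: ltW; [exact: pp_gt0 (haa x) | exact: qq_gt0 (haa x.+1)].
exact: ratio_le.
Qed.

Lemma col_of_bal (s : nat -> R) :
  (forall y, s y.+1 * qq (a y.+1) = s y * pp (a y)) ->
  forall y, \sum_(x < y.+2) s x * P x y = s y.
Proof.
move=> hb [|y].
  by rewrite (col0 s a); have := hb 0%N; lra.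
rewrite (colS s a) -(hb y).
have er : rr (a y.+1) = 1 - pp (a y.+1) - qq (a y.+1).
  by rewrite -(sum_pqr (haa y.+1)); ring.
rewrite er; have := hb y.+1; lra.
Qed.

Lemma bal_of_col (s : nat -> R) :
  (forall y, \sum_(x < y.+2) s x * P x y = s y) ->
  forall y, s y.+1 * qq (a y.+1) = s y * pp (a y).
Proof.
move=> hc; elim=> [|y IH].
  by have := hc 0%N; rewrite (col0 s a); lra.
have := hc y.+1; rewrite (colS s a).
have er : rr (a y.+1) = 1 - pp (a y.+1) - qq (a y.+1).
  by rewrite -(sum_pqr (haa y.+1)); ring.
rewrite er; lra.
Qed.

Section Inv.
Local Open Scope ereal_scope.

Lemma inv_col (s : nat -> R) y :
  \sum_(x <oo) (s x * P x y)%:E = (s y)%:E -> (\sum_(x < y.+2) s x * P x y = s y)%R.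
Proof.
rewrite (@series_trunc _ _ _ _ y.+2) //; last first.
  by move=> i hi _; rewrite /P W_far2 // mulr0.
rewrite sumEFin big_mkord => h; exact: EFin_inj h.
Qed.

Lemma col_inv (s : nat -> R) y :
  (\sum_(x < y.+2) s x * P x y = s y)%R -> \sum_(x <oo) (s x * P x y)%:E = (s y)%:E.
Proof.
move=> h; rewrite (@series_trunc _ _ _ _ y.+2) //; last first.
  by move=> i hi _; rewrite /P W_far2 // mulr0.
by rewrite sumEFin big_mkord h.
Qed.

Definition Zt := \sum_(x <oo) (pi x)%:E.
Definition Z := fine Zt.

Lemma Zt_fin : Zt \is a fin_num.
Proof.
have [C hC] := mom_bnd 0 rho0_ge0 rho0_lt1.
rewrite ge0_fin_numE; last by apply: nneseries_ge0 => n _ _; rewrite lee_fin ltW ?pi_gt0.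
apply: (@le_lt_trans _ _ C%:E); last by rewrite ltey.
apply: series_le => [n _ _|N]; first by rewrite lee_fin ltW ?pi_gt0.
rewrite sumEFin lee_fin; apply: le_trans (hC N).
by apply: ler_sum_nat => i _; rewrite expr0 mul1r pi_le.
Qed.

Lemma ZtE : Zt = Z%:E. Proof. by rewrite /Z fineK // Zt_fin. Qed.

Lemma Z_ge1 : (1 <= Z)%R.
Proof.
rewrite -lee_fin -ZtE /Zt; apply: le_trans (nneseries_lim_ge 1 _).
  by rewrite big_nat1.
by move=> n _ _; rewrite lee_fin ltW ?pi_gt0.
Qed.

Definition sdist x := (pi x / Z)%R.

Lemma inv_sdist : invariant_distribution P sdist.
Proof.
have hZ : (0 < Z)%R by have := Z_ge1; lra.
split; first by move=> x; rewrite /sdist divr_ge0 // ltW ?pi_gt0.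
split.
  transitivity (\sum_(x <oo) ((Z^-1)%:E * (pi x)%:E)).
    by apply: eq_eseriesr => n _; rewrite -EFinM mulrC.
  rewrite nneseriesZl; last by move=> n _; rewrite lee_fin ltW ?pi_gt0.
  by rewrite -/Zt ZtE -EFinM mulVf // lt0r_neq0.
move=> y; apply: col_inv; apply: col_of_bal => z.
by rewrite /sdist mulrAC (pi_bal z) mulrAC.
Qed.

Lemma inv_form (s : nat -> R) : invariant_distribution P s -> s = sdist.
Proof.
move=> [s0 [s1 s2]].
have hb := bal_of_col (fun y => inv_col (s2 y)).
have hf : forall x, s x = (s 0%N * pi x)%R.
  elim=> [|x IH]; first by rewrite mulr1.
  apply: (mulIf (qq_neq0 x.+1)); by rewrite hb IH -(mulrA (s 0%N) (pi x.+1)) (pi_bal x) (mulrA (s 0%N)).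
have hZ : (0 < Z)%R by have := Z_ge1; lra.
have e : (s 0%N * Z = 1)%R.
  apply: EFin_inj; rewrite EFinM -ZtE -s1 /Zt -nneseriesZl; last first.
    by move=> n _; rewrite lee_fin ltW ?pi_gt0.
  by apply: eq_eseriesr => n _; rewrite -EFinM (hf n).
apply/funext => x; rewrite (hf x) /sdist mulrC.
have -> : s 0%N = (Z^-1)%R.
  by apply: (mulIf (lt0r_neq0 hZ)); rewrite e mulVf // lt0r_neq0.
by [].
Qed.

Lemma uniq_inv : unique_invariant_distribution P.
Proof.
by exists sdist; split; [exact: inv_sdist | move=> s' /inv_form].
Qed.

Lemma inv_le (s : nat -> R) : invariant_distribution P s ->
  forall x, (0 <= s x)%R /\ (s x <= rho0 ^+ x)%R.
Proof.
move=> hs x; rewrite (inv_form hs) /sdist.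
have hZ : (0 < Z)%R by have := Z_ge1; lra.
split; first by rewrite divr_ge0 ?ltW ?pi_gt0.
apply: (le_trans _ (pi_le x)); rewrite ler_pdivrMr //.
by rewrite ler_pMr ?pi_gt0 ?Z_ge1.
Qed.

Lemma mom_inv q C (s : nat -> R) :
  (forall N, \sum_(0 <= x < N) x%:R ^+ q * rho0 ^+ x <= C)%R ->
  invariant_distribution P s ->
  \sum_(x <oo) ((x%:R ^+ q * s x)%:E) <= C%:E.
Proof.
move=> hC hs; have hb := inv_le hs.
apply: series_le => [n _ _|N].
  by rewrite lee_fin mulr_ge0 ?exprn_ge0 //; case: (hb n).
rewrite sumEFin lee_fin; apply: le_trans (hC N).
apply: ler_sum_nat => i _; apply: ler_wpM2l; first by rewrite exprn_ge0.
by case: (hb i).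
Qed.

End Inv.

End Chain.
End Model.

Unset Implicit Arguments. Set Strict Implicit.

Lemma pow_bnd (R : realType) (pk : R) (n : nat) (x : nat) :
  0 <= pk -> pk <= n%:R -> x%:R `^ pk <= 1 + x%:R ^+ n.
Proof.
move=> pk0 pkn; case: x => [|x].
  have h0 : 0 <= (0%:R : R) ^+ n by rewrite exprn_ge0.
  case: (eqVneq pk 0) => [->|ne]; first by rewrite powRr0 lerDl.
  by rewrite powR0 // addr_ge0.
have h1 : (1 : R) <= x.+1%:R by rewrite ler1n.
apply: le_trans (_ : x.+1%:R `^ n%:R <= _).
  by apply: ler_powR.
by rewrite powR_mulrn ?ler0n // lerDr.
Qed.

Theorem mainTheorem6 (R : realType) (delta abar Ck pk : R) (k : nat -> R)
  (hdelta : 1 / 2 < delta < 1) (habar : 0 < abar < 1)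
  (hCk : 0 < Ck) (hpk : 0 <= pk)
  (hk0 : forall x, 0 <= k x)
  (hkinc : forall x y : nat, (x <= y)%N -> k x <= k y)
  (hkbd : forall x, k x <= Ck * (x%:R `^ pk)) :
  (* Part 1 *)
  (forall (g : nat -> R -> R) (m : R),
      (forall x, abar <= g x m <= 1) ->
      irreducible (Pol delta g m) /\ aperiodic (Pol delta g m) /\
      positive_recurrent (Pol delta g m) /\
      unique_invariant_distribution (Pol delta g m)) /\
  (forall q : nat, exists C : R, forall (g : nat -> R -> R) (m : R) (s : nat -> R),
      (forall x, abar <= g x m <= 1) ->
      invariant_distribution (Pol delta g m) s ->
      (\sum_(x <oo) ((x%:R ^+ q * s x)%:E) <= C%:E)%E) /\
  (* Part 2 (a = 0, d(x,y) = |x - y|, x0 = 0, p = 2) *)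
  (exists b : R, 0 < b /\ exists C : R,
     forall g : nat -> R -> R, (forall x m, abar <= g x m <= 1) ->
       (forall m, 0 <= m <= b -> unique_invariant_distribution (Pol delta g m)) /\
       (forall s, invariant_distribution (Pol delta g 0) s -> (0 <= Mfun k s)%E) /\
       (forall s, invariant_distribution (Pol delta g b) s -> (Mfun k s <= b%:E)%E) /\
       (forall m s, 0 <= m <= b -> invariant_distribution (Pol delta g m) s ->
          (\sum_(x <oo) ((x%:R ^+ 2 * s x)%:E) <= C%:E)%E)).
Proof.
have hr0 := rho0_ge0 hdelta habar; have hr1 := rho0_lt1 hdelta habar.
split.
  move=> g m hg.
  split; first exact: (irr hdelta habar hg).
  split; first exact: (aper hdelta habar hg).
  split; first exact: (posrec hdelta habar hg).
  exact: (uniq_inv hdelta habar hg).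
split.
  move=> q; have [C hC] := mom_bnd q hr0 hr1.
  by exists C => g m s hg hs; apply: (mom_inv hdelta habar hg hC hs).
set n := (Num.Def.trunc pk).+1.
have hn : pk <= n%:R by apply: ltW; apply: truncnS_gt.
have [C0 hC0] := mom_bnd 0 hr0 hr1.
have [Cn hCn] := mom_bnd n hr0 hr1.
have [C2 hC2] := mom_bnd 2 hr0 hr1.
have C0ge : 0 <= C0 by apply: le_trans (hC0 0%N); rewrite big_geq.
have Cnge : 0 <= Cn by apply: le_trans (hCn 0%N); rewrite big_geq.
exists (1 + Ck * (C0 + Cn)); split.
  have h : 0 <= Ck * (C0 + Cn) by apply: mulr_ge0; [exact: ltW | exact: addr_ge0].
  lra.
exists C2 => g hg.
split; first by move=> m _; exact: (uniq_inv hdelta habar (hg ^~ m)).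
split.
  move=> s [s0 _]; rewrite /Mfun; apply: nneseries_ge0 => i _ _.
  by rewrite lee_fin mulr_ge0.
split; last first.
  by move=> m s _ hs; apply: (mom_inv hdelta habar (hg ^~ m) (hC2) hs).
move=> s hs; have hb := inv_le hdelta habar (hg ^~ (1 + Ck * (C0 + Cn))) hs.
rewrite /Mfun; apply: series_le => [i _ _|N].
  by rewrite lee_fin mulr_ge0 //; case: (hb i).
rewrite sumEFin lee_fin.
apply: le_trans (_ : \sum_(0 <= x < N) (Ck * (x%:R ^+ 0 * rho0 delta ^+ x) +
                        Ck * (x%:R ^+ n * rho0 delta ^+ x)) <= _).
  apply: ler_sum_nat => i _.
  have [si1 si2] := hb i.
  have e : Ck * (i%:R ^+ 0 * rho0 delta ^+ i) + Ck * (i%:R ^+ n * rho0 delta ^+ i)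
         = (Ck * (1 + i%:R ^+ n)) * rho0 delta ^+ i by rewrite expr0; ring.
  rewrite e; apply: ler_pM => //.
  apply: le_trans (hkbd i) _; apply: ler_wpM2l; first exact: ltW.
  exact: pow_bnd.
rewrite big_split /= -!mulr_sumr -mulrDr.
have := hC0 N; have := hCn N.
have : 0 <= Ck * (C0 + Cn) by apply: mulr_ge0; [exact: ltW | exact: addr_ge0].
move=> h1 h2 h3.
apply: le_trans (_ : Ck * (C0 + Cn) <= _); last by lra.
apply: ler_wpM2l; first exact: ltW.
apply: lerD => //; rewrite mul1r; apply: (le_trans _ h3).
by apply: ler_sum_nat => i _; rewrite expr0 mul1r.
Qed.
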